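(* Let $X$ take values in $\{x_1,\dots,x_K\}$ and $Y$ in $\{y_1,\dots,y_K\}$ with a fixed joint distribution $p(X,Y)$, and let $Y_N\in\{1,\dots,N\}$ be a quantization of $Y$ given by a conditional probability $q_{\nu k}=q(Y_N=\nu\mid Y=y_k)$, $q\in\Delta$. Fix $I_0>0$. Then any solution $q^*$ of the problem $$\max_{q\in\Delta} -I(Y;Y_N)\quad\text{subject to}\quad I(X;Y_N)\ge I_0,$$ and any solution $q^*$ of the problem $$\max_{q\in\Delta} H(Y_N\mid Y)\quad\text{subject to}\quad I(X;Y_N)\ge I_0,$$ satisfies the constraint with equality: $I(X;Y_N)=I_0$ at $q=q^*$.
   Context: $\Delta$ is the set of all $q=(q_{\nu k})_{\nu\le N,\,k\le K}$ with $q_{\nu k}\ge 0$ and $\sum_{\nu=1}^N q_{\nu k}=1$ for each $k$. The quantizer induces the joint distributions $p(Y_N=\nu, Y=y_k)=q_{\nu k}p(y_k)$ and $p(X=x, Y_N=\nu)=\sum_k q_{\nu k}p(x,y_k)$ (i.e. $X\to Y\to Y_N$ is Markov). $I(\cdot;\cdot)$ denotes mutual information and $H(Y_N\mid Y)=-\sum_k p(y_k)\sum_\nu q_{\nu k}\log q_{\nu k}$ the conditional entropy; all are regarded as functions of $q$. *)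

(* Defs.v *)
From mathcomp Require Import all_boot all_order all_algebra.
From mathcomp Require Import reals exp.
Set Implicit Arguments. Unset Strict Implicit. Unset Printing Implicit Defensive.
Import Order.TTheory GRing.Theory Num.Theory.
Local Open Scope ring_scope.

Section Defs.
Variable R : realType.

Definition xlnx (x : R) : R := if x == 0 then 0 else x * ln x.

Definition mutinf (A B : nat) (J : 'I_A -> 'I_B -> R) : R :=
  \sum_(a < A) \sum_(b < B)
     (if J a b == 0 then 0
      else J a b * ln (J a b / ((\sum_(b' < B) J a b') * (\sum_(a' < A) J a' b)))).

(* fixed joint distribution p(X = x_i, Y = y_k) = p i k *)
Definition is_joint_distr (K : nat) (p : 'I_K -> 'I_K -> R) : Prop :=
  (forall i k, 0 <= p i k) /\ \sum_(i < K) \sum_(k < K) p i k = 1.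

Definition pY (K : nat) (p : 'I_K -> 'I_K -> R) (k : 'I_K) : R :=
  \sum_(i < K) p i k.

Definition Delta (N K : nat) (q : 'I_N -> 'I_K -> R) : Prop :=
  (forall nu k, 0 <= q nu k) /\ (forall k, \sum_(nu < N) q nu k = 1).

Definition pXYN (N K : nat) (p : 'I_K -> 'I_K -> R) (q : 'I_N -> 'I_K -> R)
  (i : 'I_K) (nu : 'I_N) : R := \sum_(k < K) q nu k * p i k.

Definition pYYN (N K : nat) (p : 'I_K -> 'I_K -> R) (q : 'I_N -> 'I_K -> R)
  (k : 'I_K) (nu : 'I_N) : R := q nu k * pY p k.

Definition I_XYN N K p q : R := mutinf (@pXYN N K p q).
Definition I_YYN N K p q : R := mutinf (@pYYN N K p q).
Definition H_YN_Y (N K : nat) (p : 'I_K -> 'I_K -> R) (q : 'I_N -> 'I_K -> R) : R :=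
  - \sum_(k < K) pY p k * \sum_(nu < N) xlnx (q nu k).

End Defs.

(* Main.v *)
Require Import Defs.
From mathcomp Require Import all_boot all_order all_algebra.
From mathcomp Require Import reals exp.
From mathcomp Require Import ring lra.
Import Order.TTheory GRing.Theory Num.Theory.
Local Open Scope ring_scope.

Section H.
Variable R : realType.
Implicit Types x y z s t c : R.

Lemma ln_lt_sub1 z : 0 < z -> z != 1 -> ln z < z - 1.
Proof.
move=> z0 z1; have := @expR_gt1Dx R (ln z).
rewrite lnK ?posrE // ln_eq0 // z1 => /(_ isT) h; lra.
Qed.

Lemma ln_le_sub1 z : 0 < z -> ln z <= z - 1.
Proof.
move=> z0; have [->|z1] := eqVneq z 1; first by rewrite ln1 subrr.
exact/ltW/ln_lt_sub1.
Qed.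

Lemma xlnxE x : xlnx x = x * ln x.
Proof. by rewrite /xlnx; case: eqP => [->|]; rewrite ?mul0r. Qed.

Lemma tangent_strict x y : 0 < x -> 0 <= y -> y != x ->
  x * ln x + (1 + ln x) * (y - x) < y * ln y.
Proof.
move=> x0; rewrite le0r => /orP[/eqP->|y0] yx.
  have -> : x * ln x + (1 + ln x) * (0 - x) = - x by ring.
  by rewrite mul0r oppr_lt0.
have h := @ln_lt_sub1 (x/y) (divr_gt0 x0 y0).
have : x / y != 1.
  apply/negP => /eqP e; move/eqP: yx; apply.
  by rewrite -[x](divfK (lt0r_neq0 y0)) e mul1r.
move=> /h; rewrite ln_div ?posrE // => {}h.
have h2 : y * (ln x - ln y) < x - y.
  have e : x - y = y * (x / y - 1) by rewrite mulrBr mulr1 mulrCA divff ?lt0r_neq0 // mulr1.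
  by rewrite e ltr_pM2l.
rewrite -subr_gt0.
have -> : y * ln y - (x * ln x + (1 + ln x) * (y - x)) = (x - y) - y * (ln x - ln y) by ring.
by rewrite subr_gt0.
Qed.

Lemma tangent x y : 0 < x -> 0 <= y ->
  x * ln x + (1 + ln x) * (y - x) <= y * ln y.
Proof.
move=> x0 y0; have [->|yx] := eqVneq y x; first by rewrite subrr mulr0 addr0.
exact/ltW/tangent_strict.
Qed.

Lemma convex_xlnx l x y : 0 <= l <= 1 -> 0 <= x -> 0 <= y ->
  (l * x + (1 - l) * y) * ln (l * x + (1 - l) * y) <= l * (x * ln x) + (1 - l) * (y * ln y).
Proof.
move=> /andP[l0 l1] x0 y0; set m := l * x + (1 - l) * y.
have m0 : 0 <= m by rewrite /m; nra.
move: m0; rewrite le0r => /orP[/eqP m0|m0].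
  rewrite m0 mul0r.
  have hx : 0 <= l * x by apply: mulr_ge0.
  have hy : 0 <= (1 - l) * y by apply: mulr_ge0; lra.
  have hm : l * x + (1 - l) * y = 0 by [].
  have lx : l * x = 0 by lra.
  have ly : (1 - l) * y = 0 by lra.
  by rewrite mulrA lx mul0r mulrA ly mul0r addr0.
have h1 := @tangent m x m0 x0; have h2 := @tangent m y m0 y0.
have e : l * (m * ln m + (1 + ln m) * (x - m)) + (1 - l) * (m * ln m + (1 + ln m) * (y - m)) = m * ln m.
  rewrite /m; ring.
rewrite -e; apply: lerD; apply: ler_wpM2l => //; lra.
Qed.


Lemma sum_ge_elem n (F : 'I_n -> R) j : (forall i, 0 <= F i) -> F j <= \sum_i F i.
Proof. by move=> F0; rewrite (bigD1 j) //= lerDl sumr_ge0. Qed.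

Lemma ltr_sum1 n (F G : 'I_n -> R) j : (forall i, F i <= G i) -> F j < G j ->
  \sum_i F i < \sum_i G i.
Proof.
move=> FG Fj; rewrite (bigD1 j) //= [X in _ < X](bigD1 j) //=.
by apply: ltr_leD => //; apply: ler_sum.
Qed.

Lemma ltr_sum2 A B (F G : 'I_A -> 'I_B -> R) a0 b0 :
  (forall a b, F a b <= G a b) -> F a0 b0 < G a0 b0 ->
  \sum_a \sum_b F a b < \sum_a \sum_b G a b.
Proof.
move=> FG Fj; apply: (@ltr_sum1 _ _ _ a0).
  by move=> a; apply: ler_sum.
exact: (@ltr_sum1 _ _ _ b0).
Qed.

Section MI.
Variables (A B : nat) (J : 'I_A -> 'I_B -> R).
Let rA a := \sum_(b < B) J a b.
Let cB b := \sum_(a < A) J a b.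
Hypothesis J0 : forall a b, 0 <= J a b.

Lemma Jpos_marg a b : J a b != 0 -> 0 < J a b /\ 0 < rA a /\ 0 < cB b.
Proof.
move=> nz; have Jp : 0 < J a b by rewrite lt0r nz J0.
split=> //; split.
  by apply: (lt_le_trans Jp); apply: (@sum_ge_elem _ (J a)).
by apply: (lt_le_trans Jp); apply: (@sum_ge_elem _ (J ^~ b)).
Qed.

Lemma mutinf_decomp :
  mutinf J = \sum_a \sum_b J a b * ln (J a b)
           - \sum_a rA a * ln (rA a) - \sum_b cB b * ln (cB b).
Proof.
rewrite /mutinf.
transitivity (\sum_a \sum_b (J a b * ln (J a b) - J a b * ln (rA a) - J a b * ln (cB b))).
  apply: eq_bigr => a _; apply: eq_bigr => b _.
  case: eqP => [->|/eqP nz]; first by rewrite !mul0r !subrr.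
  have [Jp [rp cp]] := @Jpos_marg a b nz.
  rewrite ln_div ?posrE ?mulr_gt0 // lnM ?posrE //; ring.
rewrite (eq_bigr (fun a => \sum_b J a b * ln (J a b) - \sum_b J a b * ln (rA a) - \sum_b J a b * ln (cB b))); last first.
  by move=> a _; rewrite !sumrB.
rewrite !sumrB; congr (_ - _ - _).
  by apply: eq_bigr => a _; rewrite -mulr_suml.
rewrite exchange_big /=; apply: eq_bigr => b _; by rewrite -mulr_suml.
Qed.

Lemma mutinf_gibbs : \sum_a \sum_b J a b = 1 ->
  (forall a b, J a b = rA a * cB b) \/ 0 < mutinf J.
Proof.
move=> J1.
set T := fun a b => if J a b == 0 then 0
      else J a b * ln (J a b / ((\sum_(b' < B) J a b') * (\sum_(a' < A) J a' b))).
have low : forall a b, J a b - rA a * cB b <= T a b /\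
     (J a b != 0 -> J a b != rA a * cB b -> J a b - rA a * cB b < T a b).
  move=> a b; rewrite /T; case: eqP => [->|/eqP nz].
    split=> //; rewrite sub0r oppr_le0 mulr_ge0 //; apply: sumr_ge0 => *; exact: J0.
  have [Jp [rp cp]] := @Jpos_marg a b nz.
  have e : J a b * ln (J a b / (rA a * cB b)) = - (J a b * ln (rA a * cB b / J a b)).
    by rewrite -invf_div lnV ?posrE ?divr_gt0 ?mulr_gt0 // mulrN.
  have e2 : J a b - rA a * cB b = - (J a b * (rA a * cB b / J a b - 1)).
    by rewrite mulrBr mulr1 mulrCA divff ?lt0r_neq0 // mulr1 opprB.
  rewrite /rA /cB in e e2 *; rewrite e e2; split.
    rewrite lerN2 ler_pM2l //.
    by apply: ln_le_sub1; rewrite divr_gt0 ?mulr_gt0.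
  move=> _ ne; rewrite ltrN2 ltr_pM2l //; apply: ln_lt_sub1; first by rewrite divr_gt0 ?mulr_gt0.
  apply/negP => /eqP h; move/eqP: ne; apply.
  by rewrite -[RHS](divfK (lt0r_neq0 Jp)) h mul1r.
have sum0 : \sum_a \sum_b (J a b - rA a * cB b) = 0.
  under eq_bigr do rewrite sumrB -mulr_sumr.
  rewrite sumrB -mulr_suml J1.
  have -> : \sum_b cB b = 1 by rewrite /cB exchange_big.
  by rewrite mul1r subrr.
case: (boolP [exists a, exists b, (J a b != 0) && (J a b != rA a * cB b)]).
  case/existsP => a0 /existsP [b0 /andP [h1 h2]]; right.
  rewrite -sum0; apply: (@ltr_sum2 _ _ _ _ a0 b0).
    by move=> a b; case: (low a b).
  by case: (low a0 b0) => _; apply.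
move/existsPn => h; left.
have nn : forall a b, 0 <= rA a * cB b - J a b.
  move=> a b; move: (h a) => /existsPn /(_ b); rewrite negb_and !negbK.
  case/orP => [/eqP->|/eqP->]; last by rewrite subrr.
  by rewrite subr0 mulr_ge0 // sumr_ge0 // => *; exact: J0.
have s0 : \sum_a \sum_b (rA a * cB b - J a b) = 0.
  transitivity (- \sum_a \sum_b (J a b - rA a * cB b)); last by rewrite sum0 oppr0.
  rewrite -sumrN; apply: eq_bigr => a _; rewrite -sumrN; apply: eq_bigr => b _; by rewrite opprB.
move=> a b.
have := @psumr_eq0P _ _ predT _ (fun a _ => sumr_ge0 _ (fun b _ => nn a b)) s0 a isT.
move/(@psumr_eq0P _ _ predT _ (fun b _ => nn a b))/(_ b isT)/eqP.
by rewrite subr_eq0 => /eqP.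
Qed.

End MI.


Lemma convex_xlnx_t t x y : 0 <= t <= 1 -> 0 <= x -> 0 <= y ->
  ((1 - t) * x + t * y) * ln ((1 - t) * x + t * y) <= (1 - t) * (x * ln x) + t * (y * ln y).
Proof.
move=> /andP[t0 t1] x0 y0.
have := @convex_xlnx (1 - t) x y.
rewrite (_ : 1 - (1 - t) = t); last by ring.
apply => //; apply/andP; split; lra.
Qed.

Lemma sln_ge s : 0 < s -> s - 1 <= s * ln s.
Proof.
move=> s0; have := @ln_le_sub1 (s^-1); rewrite invr_gt0 => /(_ s0).
rewrite lnV ?posrE // => h.
have : s * (- ln s) <= s * (s^-1 - 1) by rewrite ler_pM2l.
rewrite mulrBr mulr1 divff ?lt0r_neq0 // mulrN; lra.
Qed.

Lemma cont_xlnx x c s : 0 <= x -> 0 <= c <= 1 -> 0 < s <= 1 ->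
  x * ln x - s * (`|1 + ln x| * `|c - x| + 3)
    <= ((1 - s * s) * x + s * s * c) * ln ((1 - s * s) * x + s * s * c).
Proof.
move=> x0 /andP[c0 c1] /andP[s0 s1].
set y := (1 - s * s) * x + s * s * c.
have ss0 : 0 < s * s by rewrite mulr_gt0.
have sss : s * s <= s by nra.
have y0 : 0 <= y by rewrite /y addr_ge0 ?mulr_ge0 //; nra.
have nP : 0 <= `|1 + ln x| * `|c - x| by rewrite mulr_ge0.
move: x0; rewrite le0r => /orP[/eqP x0|x0].
  rewrite /y x0 mulr0 add0r mul0r sub0r.
  rewrite x0 in nP.
  have := @tangent (s * s) (s * s * c) ss0 (mulr_ge0 (ltW ss0) c0).
  rewrite lnM ?posrE //.
  have hl : ln s <= 0 by apply: ln_le0.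
  have hs := @sln_ge s s0.
  have h1 : 0 <= (s * s - s * s * c) * (- ln s) by rewrite mulr_ge0 ?oppr_ge0 //; nra.
  have h2 : 0 <= s * (s * ln s - s + 1) by rewrite mulr_ge0 //; lra.
  have h3 : 0 <= s * (`|1 + ln 0| * `|c - 0|) by rewrite mulr_ge0 // ltW.
  move=> ht; nra.
have := @tangent x y x0 y0.
have hP := lerNnormlW (lexx `|(1 + ln x) * (c - x)|).
rewrite normrM in hP.
have e : y - x = s * s * (c - x) by rewrite /y; ring.
rewrite e => ht.
have h4 : (s * s) * (- (`|1 + ln x| * `|c - x|)) <= (s * s) * ((1 + ln x) * (c - x)) by rewrite ler_pM2l.
have h5 : (s * s) * (`|1 + ln x| * `|c - x|) <= s * (`|1 + ln x| * `|c - x|) by rewrite ler_wpM2r.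
nra.
Qed.


Lemma logsum a c d : 0 <= a -> 0 < c -> 0 < d ->
  (a + d) * ln ((a + d) / (c + d)) <= a * ln (a / c).
Proof.
move=> a0 c0 d0.
have cd0 : 0 < c + d by rewrite addr_gt0.
set l := c / (c + d).
have l01 : 0 <= l <= 1.
  rewrite /l divr_ge0 ?ltW //=.
  by rewrite ltr_pdivrMr // mul1r ltrDl.
have := @convex_xlnx l (a / c) 1 l01 (divr_ge0 a0 (ltW c0)) ler01.
rewrite ln1 mulr0 mulr0 addr0.
have e1 : l * (a / c) + (1 - l) * 1 = (a + d) / (c + d).
  rewrite /l; field; rewrite ?lt0r_neq0 //.
rewrite e1 -(ler_pM2l cd0).
have e2 : (c + d) * (l * (a / c * ln (a / c))) = a * ln (a / c).
  rewrite /l; field; rewrite ?lt0r_neq0 //.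
have e3 : forall X, (c + d) * ((a + d) / (c + d) * X) = (a + d) * X.
  by move=> X; field; rewrite lt0r_neq0.
by rewrite e2 e3.
Qed.


Lemma mutinf_ext A B (J J' : 'I_A -> 'I_B -> R) :
  (forall a b, J a b = J' a b) -> mutinf J = mutinf J'.
Proof.
move=> h; rewrite /mutinf; apply: eq_bigr => a _; apply: eq_bigr => b _.
rewrite (eq_bigr _ (fun b' _ => h a b')) (eq_bigr _ (fun a' _ => h a' b)).
by rewrite h.
Qed.

Section P.
Variables (K N : nat) (p : 'I_K -> 'I_K -> R).
Hypothesis jd : is_joint_distr p.
Hypothesis N0 : (0 < N)%N.
Implicit Types q qs : 'I_N -> 'I_K -> R.

Definition mix t (q : 'I_N -> 'I_K -> R) : 'I_N -> 'I_K -> R :=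
  fun nu k => (1 - t) * q nu k + t / N%:R.
Definition pX (i : 'I_K) := \sum_(k < K) p i k.

Let p0 i k : 0 <= p i k. Proof. by case: jd. Qed.
Let Nr0 : (N%:R : R) != 0. Proof. by rewrite pnatr_eq0 -lt0n. Qed.
Let Nrp : (0 : R) < N%:R. Proof. by rewrite ltr0n. Qed.

Lemma sum_pY : \sum_k pY p k = 1.
Proof. by case: jd => _ <-; rewrite /pY exchange_big. Qed.

Lemma sum_pX : \sum_i pX i = 1.
Proof. by case: jd. Qed.

Lemma pY_ge0 k : 0 <= pY p k.
Proof. by apply: sumr_ge0 => i _. Qed.

Lemma pX_ge0 i : 0 <= pX i.
Proof. by apply: sumr_ge0 => k _. Qed.

Lemma pX_le1 i : pX i <= 1.
Proof. rewrite -sum_pX; apply: (@sum_ge_elem _ pX) => j; exact: pX_ge0. Qed.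

Lemma pY0 k i : pY p k = 0 -> p i k = 0.
Proof.
move=> h; exact: (@psumr_eq0P _ _ predT (fun i => p i k) (fun i _ => p0 i k) h i isT).
Qed.

Lemma sum_const_N (c : R) : \sum_(nu < N) c = c * N%:R.
Proof. by rewrite sumr_const card_ord mulr_natr. Qed.

Lemma Delta_mix q t : Delta q -> 0 <= t <= 1 -> Delta (mix t q).
Proof.
move=> [q0 q1] /andP[t0 t1]; split.
  move=> nu k; rewrite /mix addr_ge0 ?mulr_ge0 ?subr_ge0 ?divr_ge0 ?invr_ge0 ?ler0n //.
move=> k; rewrite /mix big_split /= -mulr_sumr q1 sum_const_N divfK //; ring.
Qed.

Lemma pXYN_ge0 q : Delta q -> forall i nu, 0 <= pXYN p q i nu.
Proof. by move=> [q0 _] i nu; apply: sumr_ge0 => k _; rewrite mulr_ge0. Qed.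

Lemma pYYN_ge0 q : Delta q -> forall k nu, 0 <= pYYN p q k nu.
Proof. by move=> [q0 _] k nu; rewrite /pYYN mulr_ge0 ?pY_ge0. Qed.

Lemma rowXY q : Delta q -> forall i, \sum_nu pXYN p q i nu = pX i.
Proof.
move=> [_ q1] i; rewrite /pXYN exchange_big /=; apply: eq_bigr => k _.
by rewrite -mulr_suml q1 mul1r.
Qed.

Lemma rowYY q : Delta q -> forall k, \sum_nu pYYN p q k nu = pY p k.
Proof. by move=> [_ q1] k; rewrite /pYYN -mulr_suml q1 mul1r. Qed.

Lemma pXYN_mix q t i nu :
  pXYN p (mix t q) i nu = (1 - t) * pXYN p q i nu + t / N%:R * pX i.
Proof.
rewrite /pXYN /mix /pX !mulr_sumr -big_split /=; apply: eq_bigr => k _; ring.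
Qed.

Lemma colXY_mix q t nu :
  \sum_i pXYN p (mix t q) i nu = (1 - t) * \sum_i pXYN p q i nu + t / N%:R.
Proof.
under eq_bigr do rewrite pXYN_mix.
by rewrite big_split /= -!mulr_sumr sum_pX mulr1.
Qed.

Lemma colYY_mix q t nu :
  \sum_k pYYN p (mix t q) k nu = (1 - t) * \sum_k pYYN p q k nu + t / N%:R.
Proof.
rewrite /pYYN /mix.
rewrite (eq_bigr (fun k => (1 - t) * (q nu k * pY p k) + t / N%:R * pY p k)); last by move=> k _; ring.
by rewrite big_split /= -!mulr_sumr sum_pY mulr1.
Qed.


Lemma exists_pY : exists k, pY p k != 0.
Proof.
case: (pickP (fun k => pY p k != 0)) => [k hk|none]; first by exists k.
have : \sum_k pY p k = 0 by apply: big1 => k _; move/negbT: (none k); rewrite negbK => /eqP.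
by rewrite sum_pY => /eqP; rewrite oner_eq0.
Qed.

Lemma const_zero q (c : 'I_N -> R) : Delta q ->
  (forall k, pY p k != 0 -> forall nu, q nu k = c nu) -> I_XYN p q = 0.
Proof.
move=> [q0 q1] hc.
have e : forall i nu, pXYN p q i nu = c nu * pX i.
  move=> i nu; rewrite /pXYN /pX mulr_sumr; apply: eq_bigr => k _.
  have [z|nz] := eqVneq (pY p k) 0; first by rewrite (@pY0 k i z) !mulr0.
  by rewrite hc // mulrC.
have [k0 hk0] := exists_pY.
have c1 : \sum_nu c nu = 1 by rewrite -(q1 k0); apply: eq_bigr => nu _; rewrite hc.
rewrite /I_XYN (@mutinf_ext _ _ _ _ e) /mutinf; apply: big1 => i _; apply: big1 => nu _.
case: eqP => // /eqP nz.
rewrite -mulr_suml c1 mul1r -mulr_sumr sum_pX mulr1 [pX i * _]mulrC divff ?ln1 ?mulr0 //.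
Qed.

Definition unif : 'I_N -> 'I_K -> R := fun _ _ => N%:R^-1.

Lemma H_convex q t : Delta q -> 0 <= t <= 1 ->
  (1 - t) * H_YN_Y p q + t * H_YN_Y p unif <= H_YN_Y p (mix t q).
Proof.
move=> [q0 q1] t01; have /andP[t0 t1] := t01.
rewrite /H_YN_Y mulrN mulrN -opprD lerN2.
apply: (@le_trans _ _ (\sum_k pY p k * \sum_nu ((1 - t) * xlnx (q nu k) + t * xlnx (N%:R^-1)))).
  apply: ler_sum => k _; apply: ler_wpM2l; first exact: pY_ge0.
  apply: ler_sum => nu _; rewrite /mix !xlnxE.
  by apply: convex_xlnx_t => //; rewrite invr_ge0 ler0n.
rewrite le_eqVlt; apply/orP; left; apply/eqP.
rewrite !mulr_sumr -big_split /=; apply: eq_bigr => k _.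
rewrite big_split /= -!mulr_sumr /unif; ring.
Qed.

Lemma H_strict q : Delta q -> (exists k, pY p k != 0 /\ exists nu, q nu k != N%:R^-1) ->
  H_YN_Y p q < H_YN_Y p unif.
Proof.
move=> [q0 q1] [k0 [hk0 [nu0 hnu0]]].
have u0 : (0 : R) < N%:R^-1 by rewrite invr_gt0.
have tg : forall k nu, xlnx (N%:R^-1) + (1 + ln N%:R^-1) * (q nu k - N%:R^-1) <= xlnx (q nu k)
     /\ (q nu k != N%:R^-1 -> xlnx (N%:R^-1) + (1 + ln N%:R^-1) * (q nu k - N%:R^-1) < xlnx (q nu k)).
  move=> k nu; rewrite !xlnxE; split; first exact: tangent.
  exact: tangent_strict.
have sm : forall k, \sum_nu (xlnx (N%:R^-1) + (1 + ln N%:R^-1) * (q nu k - N%:R^-1)) = \sum_(nu < N) xlnx (N%:R^-1).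
  move=> k; rewrite big_split /= -mulr_sumr sumrB q1 !sum_const_N mulVf // subrr mulr0 addr0 //.
rewrite /H_YN_Y ltrN2 /unif.
apply: (@ltr_sum1 _ _ _ k0).
  move=> k; apply: ler_wpM2l; first exact: pY_ge0.
  rewrite -(sm k); apply: ler_sum => nu _; by case: (tg k nu).
rewrite ltr_pM2l; last by rewrite lt0r hk0 pY_ge0.
rewrite -(sm k0); apply: (@ltr_sum1 _ _ _ nu0).
  by move=> nu; case: (tg k0 nu).
by case: (tg k0 nu0) => _; apply.
Qed.


Lemma I_YYN_mix q t : Delta q -> 0 < t < 1 -> I_YYN p (mix t q) <= (1 - t) * I_YYN p q.
Proof.
move=> hq /andP[t0 t1].
have hm : Delta (mix t q) by apply: Delta_mix => //; rewrite !ltW.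
have [q0 q1] := hq.
rewrite /I_YYN /mutinf mulr_sumr; apply: ler_sum => k _; rewrite mulr_sumr; apply: ler_sum => nu _.
rewrite (@rowYY _ hm) (@rowYY _ hq) colYY_mix.
have b0 : 0 <= \sum_k pYYN p q k nu by apply: sumr_ge0 => k' _; exact: (@pYYN_ge0 q hq).
move: b0; set b := \sum_k pYYN p q k nu => b0.
have [z|nz] := eqVneq (pY p k) 0.
  by rewrite /pYYN z !mulr0 eqxx mulr0.
have P0 : 0 < pY p k by rewrite lt0r nz pY_ge0.
have d0 : 0 < t / N%:R * pY p k by rewrite !mulr_gt0 // invr_gt0.
have t1' : 0 < 1 - t by rewrite subr_gt0.
have e1 : pYYN p (mix t q) k nu = (1 - t) * (q nu k * pY p k) + t / N%:R * pY p k.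
  by rewrite /pYYN /mix; ring.
have e2 : pY p k * ((1 - t) * b + t / N%:R) = (1 - t) * (pY p k * b) + t / N%:R * pY p k.
  by ring.
have a0 : 0 <= (1 - t) * (q nu k * pY p k) by rewrite !mulr_ge0 // ltW.
have Jt : pYYN p (mix t q) k nu != 0.
  by rewrite e1 lt0r_neq0 // ltr_pwDr.
rewrite (negbTE Jt) e1 e2.
move: b0; rewrite le0r => /orP[/eqP bz|bp].
  have qz : q nu k * pY p k = 0.
    have := @psumr_eq0P _ _ predT (fun k' => pYYN p q k' nu) (fun k' _ => @pYYN_ge0 q hq k' nu) bz k isT.
    by rewrite /pYYN.
  by rewrite qz bz !mulr0 !add0r divff ?lt0r_neq0 // ln1 mulr0 /pYYN qz eqxx mulr0.
have c0 : 0 < (1 - t) * (pY p k * b) by rewrite !mulr_gt0.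
apply: le_trans (@logsum _ _ _ a0 c0 d0) _.
rewrite /pYYN; case: eqP => [->|/eqP qp]; first by rewrite !mulr0 mul0r.
have -> : (1 - t) * (q nu k * pY p k) / ((1 - t) * (pY p k * b)) = q nu k * pY p k / (pY p k * b).
  by field; rewrite ?lt0r_neq0 // mulf_neq0 // lt0r_neq0.
by rewrite le_eqVlt; apply/orP; left; apply/eqP; ring.
Qed.


Lemma IX_lower q : Delta q -> exists M, 0 <= M /\
  forall s, 0 < s <= 1 -> I_XYN p q - s * M <= I_XYN p (mix (s * s) q).
Proof.
move=> hq.
set u : R := N%:R^-1.
have u0 : 0 <= u by rewrite invr_ge0 ler0n.
have u1 : u <= 1 by rewrite invf_le1 // ler1n.
pose J := pXYN p q.
pose cB nu := \sum_i J i nu.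
pose L i nu := `|1 + ln (J i nu)| * `|u * pX i - J i nu| + 3.
pose Ab nu := `|u * ln u - cB nu * ln (cB nu)|.
exists (\sum_i \sum_nu L i nu + \sum_nu Ab nu); split.
  apply: addr_ge0; apply: sumr_ge0 => i _; last by rewrite /Ab normr_ge0.
  by apply: sumr_ge0 => nu _; rewrite addr_ge0 ?mulr_ge0.
move=> s /andP[s0 s1].
have t01 : 0 <= s * s <= 1 by apply/andP; split; nra.
have hm : Delta (mix (s * s) q) by apply: Delta_mix.
rewrite /I_XYN (@mutinf_decomp _ _ _ (@pXYN_ge0 q hq)) (@mutinf_decomp _ _ _ (@pXYN_ge0 _ hm)) /=.
have er : \sum_i (\sum_nu pXYN p (mix (s * s) q) i nu) * ln (\sum_nu pXYN p (mix (s * s) q) i nu)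
        = \sum_i (\sum_nu pXYN p q i nu) * ln (\sum_nu pXYN p q i nu).
  by apply: eq_bigr => i _; rewrite (@rowXY _ hm) (@rowXY _ hq).
rewrite er.
have h1 : \sum_i \sum_nu J i nu * ln (J i nu) - s * \sum_i \sum_nu L i nu
     <= \sum_i \sum_nu pXYN p (mix (s * s) q) i nu * ln (pXYN p (mix (s * s) q) i nu).
  rewrite mulr_sumr -sumrB; apply: ler_sum => i _.
  rewrite mulr_sumr -sumrB; apply: ler_sum => nu _.
  rewrite pXYN_mix.
  have e : (1 - s * s) * pXYN p q i nu + s * s / N%:R * pX i
         = (1 - s * s) * J i nu + s * s * (u * pX i) by rewrite /J /u; ring.
  rewrite e; apply: cont_xlnx; first exact: pXYN_ge0.
    by rewrite mulr_ge0 ?pX_ge0 // mulr_ile1 ?pX_ge0 ?pX_le1.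
  by rewrite s0 s1.
have h2 : \sum_nu (\sum_i pXYN p (mix (s * s) q) i nu) * ln (\sum_i pXYN p (mix (s * s) q) i nu)
     <= \sum_nu cB nu * ln (cB nu) + s * \sum_nu Ab nu.
  rewrite mulr_sumr -big_split; apply: ler_sum => nu _ /=.
  rewrite colXY_mix.
  have cB0 : 0 <= cB nu by apply: sumr_ge0 => i _; exact: pXYN_ge0.
  have := @convex_xlnx_t (s * s) (cB nu) u t01 cB0 u0.
  rewrite /cB /J /u => h; apply: (le_trans h).
  have hA : u * ln u - cB nu * ln (cB nu) <= Ab nu := ler_norm _.
  have hA0 : 0 <= Ab nu := normr_ge0 _.
  have : (s * s) * (u * ln u - cB nu * ln (cB nu)) <= s * Ab nu.
    apply: (@le_trans _ _ ((s * s) * Ab nu)); first by rewrite ler_pM2l ?mulr_gt0.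
    by rewrite ler_wpM2r //; nra.
  rewrite /cB /J /u; lra.
lra.
Qed.


Lemma choose_s (d M : R) : 0 < d -> 0 <= M -> exists s, 0 < s <= 2^-1 /\ s * M <= d.
Proof.
move=> d0 M0; have M1 : 0 < M + 1 by rewrite ltr_wpDl.
have key : forall s, 0 < s -> s <= d / (M + 1) -> s * M <= d.
  move=> s s0 h; have : s * (M + 1) <= d by rewrite -ler_pdivlMr.
  nra.
have h2 : (0 : R) < 2^-1 by rewrite invr_gt0.
have [h|h] := lerP (d / (M + 1)) 2^-1.
  exists (d / (M + 1)); split; last exact: key (divr_gt0 d0 M1) (lexx _).
  by rewrite h divr_gt0.
exists 2^-1; split; first by rewrite h2 lexx.
exact: key h2 (ltW h).
Qed.

Lemma main1 qs (I0 : R) : 0 < I0 -> Delta qs -> I0 <= I_XYN p qs ->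
  (forall q, Delta q -> I0 <= I_XYN p q -> - I_YYN p q <= - I_YYN p qs) ->
  I_XYN p qs = I0.
Proof.
move=> I00 hqs hle hopt.
apply/eqP; rewrite eq_le hle andbT leNgt; apply/negP => lt.
have [M [M0 hM]] := @IX_lower qs hqs.
have d0 : 0 < I_XYN p qs - I0 by rewrite subr_gt0.
have [s [/andP[s0 s2] sM]] := @choose_s (I_XYN p qs - I0) M d0 M0.
have s1 : s <= 1 by apply: (le_trans s2); rewrite invf_le1 // ler1n.
have t01 : 0 <= s * s <= 1 by apply/andP; split; nra.
have hm := @Delta_mix qs (s * s) hqs t01.
have feas : I0 <= I_XYN p (mix (s * s) qs).
  apply: le_trans (hM s _); last by rewrite s0 s1.
  lra.
have := hopt _ hm feas; rewrite lerN2 => hge.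
have := @mutinf_gibbs _ _ (pYYN p qs) (@pYYN_ge0 _ hqs).
rewrite (eq_bigr _ (fun k _ => @rowYY _ hqs k)) sum_pY => /(_ erefl) [hJ|hpos].
  have : I_XYN p qs = 0.
    apply: (@const_zero qs (fun nu => \sum_k pYYN p qs k nu)) => // k nz nu.
    have := hJ k nu; rewrite (@rowYY _ hqs) /pYYN => e.
    by apply: (mulIf nz); rewrite e mulrC.
  move=> e; rewrite e in lt; lra.
have hmix := @I_YYN_mix qs (s * s) hqs.
have : 0 < s * s < 1 by apply/andP; split; nra.
move/hmix => h.
have : (1 - s * s) * I_YYN p qs < I_YYN p qs.
  rewrite mulrBl mul1r ltrBlDr ltrDl; apply: mulr_gt0 => //; nra.
rewrite /I_YYN in h hge *; lra.
Qed.

Lemma main2 qs (I0 : R) : 0 < I0 -> Delta qs -> I0 <= I_XYN p qs ->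
  (forall q, Delta q -> I0 <= I_XYN p q -> H_YN_Y p q <= H_YN_Y p qs) ->
  I_XYN p qs = I0.
Proof.
move=> I00 hqs hle hopt.
apply/eqP; rewrite eq_le hle andbT leNgt; apply/negP => lt.
have [M [M0 hM]] := @IX_lower qs hqs.
have d0 : 0 < I_XYN p qs - I0 by rewrite subr_gt0.
have [s [/andP[s0 s2] sM]] := @choose_s (I_XYN p qs - I0) M d0 M0.
have s1 : s <= 1 by apply: (le_trans s2); rewrite invf_le1 // ler1n.
have t01 : 0 <= s * s <= 1 by apply/andP; split; nra.
have hm := @Delta_mix qs (s * s) hqs t01.
have feas : I0 <= I_XYN p (mix (s * s) qs).
  apply: le_trans (hM s _); last by rewrite s0 s1.
  lra.
have hge := hopt _ hm feas.
case: (boolP [exists k, (pY p k != 0) && [exists nu, qs nu k != N%:R^-1]]).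
  case/existsP => k /andP[nz /existsP[nu hnu]].
  have hs := @H_strict qs hqs (ex_intro _ k (conj nz (ex_intro _ nu hnu))).
  have hc := @H_convex qs (s * s) hqs t01.
  have ss0 : 0 < s * s by rewrite mulr_gt0.
  have : s * s * H_YN_Y p qs < s * s * H_YN_Y p unif by rewrite ltr_pM2l.
  nra.
move/existsPn => hn.
have : I_XYN p qs = 0.
  apply: (@const_zero qs (fun _ => N%:R^-1)) => // k nz nu.
  move: (hn k); rewrite negb_and nz /= => /existsPn /(_ nu).
  by rewrite negbK => /eqP.
move=> e; rewrite e in lt; lra.
Qed.

End P.
End H.

Lemma N_pos (R : realType) (K N : nat) (p : 'I_K -> 'I_K -> R) (qs : 'I_N -> 'I_K -> R) :
  is_joint_distr p -> Delta qs -> (0 < N)%N.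
Proof.
move=> jd [_ q1]; have [k0 _] := @exists_pY _ _ _ jd.
case: N qs q1 => // qs q1; have := q1 k0; rewrite big_ord0 => /eqP.
by rewrite eq_sym oner_eq0.
Qed.

Theorem mainTheorem1 (R : realType) (K N : nat) (p : 'I_K -> 'I_K -> R) (I0 : R) :
  is_joint_distr p -> 0 < I0 ->
  (forall qs : 'I_N -> 'I_K -> R,
     Delta qs -> I0 <= I_XYN p qs ->
     (forall q : 'I_N -> 'I_K -> R, Delta q -> I0 <= I_XYN p q ->
        - I_YYN p q <= - I_YYN p qs) ->
     I_XYN p qs = I0) /\
  (forall qs : 'I_N -> 'I_K -> R,
     Delta qs -> I0 <= I_XYN p qs ->
     (forall q : 'I_N -> 'I_K -> R, Delta q -> I0 <= I_XYN p q ->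
        H_YN_Y p q <= H_YN_Y p qs) ->
     I_XYN p qs = I0).
Proof.
move=> jd I00; split=> qs hqs hle hopt.
  exact: (@main1 _ _ _ _ jd (@N_pos _ _ _ _ _ jd hqs) qs I0 I00 hqs hle hopt).
exact: (@main2 _ _ _ _ jd (@N_pos _ _ _ _ _ jd hqs) qs I0 I00 hqs hle hopt).
Qed.
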